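(* Consider the preference robust optimization problem $$\text{(PRO)}\qquad \max_{\bm z\in Z}\ \min_{\bm v\in\mathcal V}\ \frac1K\sum_{k=1}^K(\bm R\bm v)^\top\bm g(\bm z^\top\bm\xi^k),$$ i.e. $\max_{\bm z\in Z}\min_{u\in\mathcal U}\mathbb E[u(\bm z^\top\bm\xi)]$ where $\bm\xi$ takes the values $\bm\xi^k$ each with probability $1/K$ and $\mathcal U:=\{u(\cdot)=(\bm R\bm v)^\top\bm g(\cdot):\bm v\in\mathcal V\}$. For variables $\bm z\in Z$, $\bm\lambda\in\mathbb R^{N-1}$, $\bm\eta\in\mathbb R^M$, $\bm y^k\in\mathbb R^{N-1}$, $\bm w^k\in\{0,1\}^{N-1}$ ($k=1,\dots,K$), put $\bm s:=\frac1K\sum_{k=1}^K(\bm P\bm y^k+\bm Q\bm w^k)+\sum_{m=1}^M\eta_m h_m\bm\Delta^m\in\mathbb R^{N-1}$. Then the optimal value of (PRO) equals the optimal value of the mixed-integer linear program $$\max\ \{\bm s\}_{N-1}-\bm\lambda^\top\bm b$$ subject to $\{\bm s\}_{[N-2]}-\{\bm s\}_{N-1}\bm e+\bm A^\top\bm\lambda=\bm 0$; $x_jw^k_j-y^k_j\le0$, $x_{j+1}w^k_j-y^k_j\ge0$, $w^k_j\in\{0,1\}$ for $j=1,\dots,N-1$, $k=1,\dots,K$; $\sum_{j=1}^{N-1}w^k_j=1$ and $\sum_{j=1}^{N-1}y^k_j=\bm z^\top\bm\xi^k$ for $k=1,\dots,K$; $\bm z\in Z$, $\bm\lambda\ge\bm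 0$, $\bm\eta\ge\bm 0$.
   Context: Let $N\ge3$ be an integer and $\underline x=x_1<x_2<\cdots<x_N=\bar x$ real numbers; $\bm e$ denotes the all-ones vector of the appropriate dimension. Define $\bm g:[\underline x,\bar x]\to\mathbb R^{N-1}$ by $\bm g(x_1)=\bm 0$ and, for $x\in(x_i,x_{i+1}]$ ($i\in\{1,\dots,N-1\}$), $\bm g(x)=(1,\dots,1,\frac{x-x_i}{x_{i+1}-x_i},0,\dots,0)$ with the first $i-1$ entries equal to $1$, the $i$-th entry $\frac{x-x_i}{x_{i+1}-x_i}$ and the last $N-1-i$ entries $0$. For $\bm v\in\mathbb R^{N-2}$ let $\bm R\bm v:=(v_1,\dots,v_{N-2},1-\bm e^\top\bm v)\in\mathbb R^{N-1}$. For a vector $\bm a\in\mathbb R^{N-1}$, $\{\bm a\}_{N-1}$ denotes its last component and $\{\bm a\}_{[N-2]}$ the vector of its first $N-2$ components. Let $\bm P\in\mathbb R^{(N-1)\times(N-1)}$ be diagonal with entries $\bm P_{jj}=1/(x_{j+1}-x_j)$, and $\bm Q\in\mathbb R^{(N-1)\times(N-1)}$ upper triangular with $\bm Q_{jj}=-x_j/(x_{j+1}-x_j)$, $\bm Q_{jl}=1$ for $l>j$, and $\bm Q_{jl}=0$ for $l<j$. Let $\bm A\in\mathbb R^{(N-1)\times(N-2)}$ have first row $\bm e^\top$ and, for $j=2,\dots,N-1$, $j$-th row equal to minus the $(j-1)$-th standard unit vector of $\mathbb R^{N-2}$; let $\bm b=(1,0,\dots,0)\in\mathbb R^{N-1}$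 (so $\bm A\bm v\le\bm b$ means $\bm v\ge0$, $\bm e^\top\bm v\le1$). Let $M\ge1$ and, for $m=1,\dots,M$, let $r_1^m\le r_3^m$ and $r_2^m$ lie in $[\underline x,\bar x]$, $p^m\in[0,1]$, $h_m\in\{-1,1\}$, and put $\bm\Delta^m:=(1-p^m)\bm g(r_1^m)+p^m\bm g(r_3^m)-\bm g(r_2^m)$. Let $\mathcal V:=\{\bm v\in\mathbb R^{N-2}:\bm A\bm v\le\bm b,\ h_m(\bm R\bm v)^\top\bm\Delta^m\le0,\ m=1,\dots,M\}$. Let $Z\subset\mathbb R^n$ be compact and convex, and $\bm\xi^1,\dots,\bm\xi^K\in\mathbb R^n$ with $\bm z^\top\bm\xi^k\in[\underline x,\bar x]$ for all $\bm z\in Z$ and all $k$. *)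

(* Defs.v *)
From HB Require Import structures.
From mathcomp Require Import all_boot all_order all_algebra.
From mathcomp Require Import all_classical all_reals all_analysis.
Set Implicit Arguments. Unset Strict Implicit. Unset Printing Implicit Defensive.
Import Order.TTheory GRing.Theory Num.Theory.
Import numFieldNormedType.Exports.
Local Open Scope classical_set_scope.
Local Open Scope ring_scope.

(* Conventions: vectors of R^{N-1}, R^{N-2}, R^M, breakpoints x_1..x_N,
   etc. are represented by functions nat -> R, indexed from 1 as in the
   paper; only the indices in the relevant range are ever used. *)

Section Defs.
Variable R : realType.

Definition dotn (d : nat) (a b : nat -> R) : R := \sum_(1 <= j < d.+1) a j * b j.

Definition gvec (x : nat -> R) (t : R) : nat -> R := fun j =>
  if t <= x j then 0
  else if t <= x j.+1 then (t - x j) / (x j.+1 - x j)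
  else 1.

Definition Rmap (N : nat) (v : nat -> R) : nat -> R := fun j =>
  if (j < N.-1)%N then v j else 1 - \sum_(1 <= l < N.-1) v l.

Definition Amat (j l : nat) : R :=
  if j == 1%N then 1 else if l == j.-1 then -1 else 0.
Definition bvec (j : nat) : R := if j == 1%N then 1 else 0.

Definition Pmat (x : nat -> R) (j l : nat) : R :=
  if l == j then 1 / (x j.+1 - x j) else 0.
Definition Qmat (x : nat -> R) (j l : nat) : R :=
  if l == j then - x j / (x j.+1 - x j) else if (j < l)%N then 1 else 0.

Definition mulmv (cols : nat) (A : nat -> nat -> R) (v : nat -> R) : nat -> R :=
  fun j => \sum_(1 <= l < cols.+1) A j l * v l.
Definition mulmtv (rows : nat) (A : nat -> nat -> R) (v : nat -> R) : nat -> R :=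
  fun l => \sum_(1 <= j < rows.+1) A j l * v j.

Definition Delta (x : nat -> R) (r1 r2 r3 p : nat -> R) (m : nat) : nat -> R :=
  fun j => (1 - p m) * gvec x (r1 m) j + p m * gvec x (r3 m) j - gvec x (r2 m) j.

Definition Vset (N M : nat) (x r1 r2 r3 p h : nat -> R) : set (nat -> R) :=
  [set v | (forall j, (1 <= j <= N.-1)%N -> mulmv N.-2 Amat v j <= bvec j) /\
           (forall m, (1 <= m <= M)%N ->
              h m * dotn N.-1 (Rmap N v) (Delta x r1 r2 r3 p m) <= 0)].

Definition rdot (n : nat) (z xi : 'rV[R]_n) : R := \sum_(i < n) z ord0 i * xi ord0 i.

Definition pro_obj (N K n : nat) (x : nat -> R) (xi : nat -> 'rV[R]_n)
  (z : 'rV[R]_n) (v : nat -> R) : R :=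
  K%:R^-1 * \sum_(1 <= k < K.+1) dotn N.-1 (Rmap N v) (gvec x (rdot z (xi k))).

Definition pro_value (N M K n : nat) (x r1 r2 r3 p h : nat -> R)
  (Z : set 'rV[R]_n) (xi : nat -> 'rV[R]_n) : \bar R :=
  ereal_sup [set ereal_inf [set (pro_obj N K x xi z v)%:E
                           | v in Vset N M x r1 r2 r3 p h] | z in Z].

Definition svec (N M K : nat) (x r1 r2 r3 p h : nat -> R)
  (eta : nat -> R) (y w : nat -> nat -> R) : nat -> R := fun j =>
  K%:R^-1 * \sum_(1 <= k < K.+1)
     (mulmv N.-1 (Pmat x) (y k) j + mulmv N.-1 (Qmat x) (w k) j)
  + \sum_(1 <= m < M.+1) eta m * h m * Delta x r1 r2 r3 p m j.

Definition milp_feasible (N M K n : nat) (x r1 r2 r3 p h : nat -> R)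
  (Z : set 'rV[R]_n) (xi : nat -> 'rV[R]_n)
  (z : 'rV[R]_n) (lam eta : nat -> R) (y w : nat -> nat -> R) : Prop :=
  let s := svec N M K x r1 r2 r3 p h eta y w in
  (forall j, (1 <= j <= N.-2)%N ->
     s j - s N.-1 + mulmtv N.-1 Amat lam j = 0) /\
  (forall k j, (1 <= k <= K)%N -> (1 <= j <= N.-1)%N ->
     [/\ x j * w k j - y k j <= 0, x j.+1 * w k j - y k j >= 0
       & (w k j = 0 \/ w k j = 1)]) /\
  (forall k, (1 <= k <= K)%N ->
     \sum_(1 <= j < N) w k j = 1 /\ \sum_(1 <= j < N) y k j = rdot z (xi k)) /\
  z \in Z /\
  (forall j, (1 <= j <= N.-1)%N -> 0 <= lam j) /\
  (forall m, (1 <= m <= M)%N -> 0 <= eta m).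

Definition milp_obj (N M K : nat) (x r1 r2 r3 p h : nat -> R)
  (lam eta : nat -> R) (y w : nat -> nat -> R) : R :=
  svec N M K x r1 r2 r3 p h eta y w N.-1 - dotn N.-1 lam bvec.

Definition milp_value (N M K n : nat) (x r1 r2 r3 p h : nat -> R)
  (Z : set 'rV[R]_n) (xi : nat -> 'rV[R]_n) : \bar R :=
  ereal_sup [set e | exists (z : 'rV[R]_n) (lam eta : nat -> R)
                             (y w : nat -> nat -> R),
     milp_feasible N M K x r1 r2 r3 p h Z xi z lam eta y w /\
     e = (milp_obj N M K x r1 r2 r3 p h lam eta y w)%:E].
End Defs.

Definition convex_rV (R : realType) (n : nat) (Z : set 'rV[R]_n) : Prop :=
  forall a b t, Z a -> Z b -> 0 <= t <= 1 -> Z (t *: a + (1 - t) *: b).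

(* Main.v *)
Require Import Defs.
From HB Require Import structures.
From mathcomp Require Import all_boot all_order all_algebra.
From mathcomp Require Import all_classical all_reals all_analysis.
From mathcomp Require Import ring lra.
Import Order.TTheory GRing.Theory Num.Theory.
Import numFieldNormedType.Exports.
Local Open Scope classical_set_scope.
Local Open Scope ring_scope.
Section FM.
Variable R : realFieldType.

Lemma between (l u : seq R) : (forall a b, a \in l -> b \in u -> a <= b) ->
  exists t, (forall a, a \in l -> a <= t) /\ (forall b, b \in u -> t <= b).
Proof.
elim: l => [|a0 l IH] H.
  elim: u {H} => [|b0 u [t [_ Ht]]]; first by exists 0; split.
  exists (Num.min b0 t); split => // b; rewrite inE => /orP[/eqP->|bu].
    by rewrite ge_min lexx.
  by rewrite ge_min Ht // orbT.
have [t [H1 H2]] : exists t, (forall a, a \in l -> a <= t) /\ (forall b, b \in u -> t <= b).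
  by apply: IH => a b al bu; apply: H => //; rewrite inE al orbT.
exists (Num.max a0 t); split.
  by move=> a; rewrite inE => /orP[/eqP->|al]; rewrite le_max ?lexx // H1 // orbT.
by move=> b bu; rewrite ge_max H2 // andbT; apply: H => //; rewrite inE eqxx.
Qed.

Section Comb.
Variables (I : finType) (al : I -> R).

Definition comb (F : I -> R) (i' : (I + I * I)%type) : R :=
  match i' with
  | inl i => if al i == 0 then F i else 0
  | inr (i, k) => if (0 < al i) && (al k < 0) then - al k * F i + al i * F k else 0
  end.

Definition liftc (y' : (I + I * I)%type -> R) (i : I) : R :=
  (if al i == 0 then y' (inl i) else 0)
  + \sum_k (if (0 < al i) && (al k < 0) then y' (inr (i, k)) * - al k else 0)
  + \sum_k (if (0 < al k) && (al i < 0) then y' (inr (k, i)) * al k else 0).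

Lemma liftc_ge0 y' : (forall i', 0 <= y' i') -> forall i, 0 <= liftc y' i.
Proof.
move=> y0 i; rewrite /liftc; apply: addr_ge0; first apply: addr_ge0.
- by case: ifP.
- apply: sumr_ge0 => k _; case: ifP => // /andP[_ ak]; apply: mulr_ge0 => //; lra.
- apply: sumr_ge0 => k _; case: ifP => // /andP[ak _]; apply: mulr_ge0 => //; lra.
Qed.

Lemma liftc_comb y' F : \sum_i liftc y' i * F i = \sum_i' y' i' * comb F i'.
Proof.
rewrite big_sumType /=.
rewrite (eq_bigr (fun p : I * I => y' (inr (p.1, p.2)) * comb F (inr (p.1, p.2)))); last by case.
rewrite -(pair_bigA _ (fun i k => y' (inr (i, k)) * comb F (inr (i, k)))) /=.
have -> : \sum_i \sum_k y' (inr (i, k)) * comb F (inr (i, k)) =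
   \sum_i \sum_k (if (0 < al i) && (al k < 0) then y' (inr (i, k)) * - al k else 0) * F i
 + \sum_i \sum_k (if (0 < al k) && (al i < 0) then y' (inr (k, i)) * al k else 0) * F i.
  rewrite (exchange_big _ _ _ _ _ (fun i k => (if (0 < al k) && (al i < 0) then y' (inr (k, i)) * al k else 0) * F i)) /=.
  rewrite -big_split /=; apply: eq_bigr => i _; rewrite -big_split /=.
  apply: eq_bigr => k _ /=; case: ifP => _; last by rewrite !mul0r addr0 mulr0.
  by rewrite mulrDr !mulrA.
rewrite addrA -!big_split /=; apply: eq_bigr => i _.
rewrite /liftc !mulrDl !mulr_suml; congr (_ + _ + _).
by case: ifP => _; rewrite ?mul0r ?mulr0.
Qed.

Lemma comb_al i' : comb al i' = 0.
Proof.
case: i' => [i|[i k]] /=; first by case: ifP => // /eqP.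
by case: ifP => // _; rewrite mulrC mulrN addNr.
Qed.

Lemma comb_lin (r : seq nat) (A : I -> nat -> R) (v : nat -> R) (B : I -> R) i' :
  comb (fun i => \sum_(l <- r) A i l * v l + B i) i' =
  \sum_(l <- r) comb (fun i => A i l) i' * v l + comb B i'.
Proof.
case: i' => [i|[i k]] /=; first by case: ifP => _ //; rewrite big1 ?addr0 // => l _; rewrite mul0r.
case: ifP => _; last by rewrite big1 ?addr0 // => l _; rewrite mul0r.
have -> : \sum_(l <- r) (- al k * A i l + al i * A k l) * v l =
  - al k * \sum_(l <- r) A i l * v l + al i * \sum_(l <- r) A k l * v l.
  by rewrite !mulr_sumr -big_split; apply: eq_bigr => l _; rewrite mulrDl !mulrA.
ring.
Qed.
End Comb.
Arguments comb {I}.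
Arguments liftc {I}.

Lemma farkas (d : nat) : forall (I : finType) (a : I -> nat -> R) (b : I -> R),
  (forall y : I -> R, (forall i, 0 <= y i) ->
     (forall l, (1 <= l <= d)%N -> \sum_i y i * a i l = 0) ->
     0 <= \sum_i y i * b i) ->
  exists v : nat -> R, forall i, 0 <= \sum_(1 <= l < d.+1) a i l * v l + b i.
Proof.
elim: d => [|d IH] I a b H.
  exists (fun _ => 0) => i; rewrite big_geq // add0r.
  have := H (fun j => (j == i)%:R); rewrite (bigD1 i) //= eqxx mul1r big1 ?addr0.
    apply; first by move=> j; rewrite ler0n.
    by move=> [|l] /andP[].
  by move=> j /negbTE ->; rewrite mul0r.
pose al i := a i d.+1.
have [v' Hv'] : exists v' : nat -> R, forall i',
    0 <= \sum_(1 <= l < d.+1) comb al (fun i => a i l) i' * v' l + comb al b i'.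
  apply: IH => y' y0 Hy.
  rewrite -liftc_comb; apply: H; first exact: liftc_ge0.
  move=> l /andP[l1]; rewrite leq_eqVlt ltnS => /orP[/eqP->|ld].
    rewrite liftc_comb big1 // => i' _; by rewrite comb_al mulr0.
  by rewrite liftc_comb; apply: Hy; rewrite l1 ld.
pose rest i := \sum_(1 <= l < d.+1) a i l * v' l + b i.
have Hr i' : 0 <= comb al rest i' by rewrite /rest comb_lin; exact: Hv'.
pose lo := [seq - rest i / al i | i <- enum I & 0 < al i].
pose up := [seq rest k / - al k | k <- enum I & al k < 0].
have [t [Ht1 Ht2]] : exists t, (forall a, a \in lo -> a <= t) /\ (forall b, b \in up -> t <= b).
  apply: between => u w /mapP[i]; rewrite mem_filter => /andP[ai _] -> /mapP[k].
  rewrite mem_filter => /andP[ak _] ->.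
  have := Hr (inr (i, k)); rewrite /= ai ak /= => Hik.
  set ri := rest i in Hik *; set rk := rest k in Hik *.
  set A := al i in ai Hik *; set B := - al k.
  have B0 : 0 < B by rewrite /B oppr_gt0.
  rewrite ler_pdivlMr // mulrAC ler_pdivrMr //.
  move: Hik; rewrite -/B; nra.
exists (fun l => if (l <= d)%N then v' l else t) => i.
rewrite big_nat_recr //= ltnn.
rewrite (eq_big_nat _ _ (F2 := fun l => a i l * v' l)); last first.
  by move=> l /andP[_ ld]; rewrite -ltnS ld.
have -> : \sum_(1 <= i0 < d.+1) a i i0 * v' i0 + a i d.+1 * t + b i = rest i + al i * t.
  by rewrite /rest /al; ring.
case: (ltgtP (al i) 0) => ai.
- have Hu : rest i / - al i \in up.
    by apply/mapP; exists i => //; rewrite mem_filter ai mem_enum.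
  move/Ht2: Hu; rewrite ler_pdivlMr ?oppr_gt0 // => Hle.
  by move: Hle; nra.
- have Hu : - rest i / al i \in lo.
    by apply/mapP; exists i => //; rewrite mem_filter ai mem_enum.
  move/Ht1: Hu; rewrite ler_pdivrMr // => Hle.
  by move: Hle; nra.
- have := Hr (inl i); rewrite /= ai eqxx mul0r addr0 //.
Qed.
End FM.
Section Main.
Variables (R : realType) (n M : nat) (x r1 r2 r3 p h : nat -> R).

Local Notation Dl m j := (Delta x r1 r2 r3 p m j).
Definition ES (eta : nat -> R) j := \sum_(1 <= m < M.+1) eta m * h m * Dl m j.
Definition ADT (lam : nat -> R) l := mulmtv n.+2 (@Amat R) lam l.
Definition Lin (c lam eta : nat -> R) (mu : R) l :=
  mu * c l + ES eta l - (mu * c n.+2 + ES eta n.+2) + ADT lam l.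
Definition Const (c lam eta : nat -> R) (mu : R) :=
  mu * c n.+2 + ES eta n.+2 - dotn n.+2 lam (@bvec R).
Definition DF (c lam eta : nat -> R) :=
  (forall l, (1 <= l <= n.+1)%N -> Lin c lam eta 1 l = 0) /\
  (forall j, (1 <= j <= n.+2)%N -> 0 <= lam j) /\
  (forall m, (1 <= m <= M)%N -> 0 <= eta m).

Lemma Rdot (v u : nat -> R) : dotn n.+2 (Rmap n.+3 v) u =
  u n.+2 + \sum_(1 <= l < n.+2) v l * (u l - u n.+2).
Proof.
rewrite /dotn big_nat_recr //= /Rmap ltnn.
rewrite (eq_big_nat _ _ (F2 := fun l => v l * u l)); last first.
  by move=> l /andP[_ ->].
have -> : \sum_(1 <= l < n.+2) v l * (u l - u n.+2) =
  \sum_(1 <= l < n.+2) v l * u l - (\sum_(1 <= l < n.+2) v l) * u n.+2.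
  by rewrite mulr_suml -sumrB; apply: eq_bigr => l _; rewrite mulrBr.
ring.
Qed.

Lemma ES_lin a b (e1 e2 : nat -> R) j :
  ES (fun m => a * e1 m + b * e2 m) j = a * ES e1 j + b * ES e2 j.
Proof.
rewrite /ES !mulr_sumr -big_split /=; apply: eq_bigr => m _. ring.
Qed.

Lemma ADT_lin a b (l1 l2 : nat -> R) j :
  ADT (fun m => a * l1 m + b * l2 m) j = a * ADT l1 j + b * ADT l2 j.
Proof.
by rewrite /ADT /mulmtv !mulr_sumr -big_split /=; apply: eq_bigr => m _; ring.
Qed.

Lemma dotn_lin a b (l1 l2 : nat -> R) :
  dotn n.+2 (fun m => a * l1 m + b * l2 m) (@bvec R) =
  a * dotn n.+2 l1 (@bvec R) + b * dotn n.+2 l2 (@bvec R).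
Proof.
by rewrite /dotn !mulr_sumr -big_split /=; apply: eq_bigr => m _; ring.
Qed.

Lemma Lin_lin c a b l1 l2 e1 e2 m1 m2 l :
  Lin c (fun m => a * l1 m + b * l2 m) (fun m => a * e1 m + b * e2 m) (a * m1 + b * m2) l
  = a * Lin c l1 e1 m1 l + b * Lin c l2 e2 m2 l.
Proof. rewrite /Lin !ES_lin ADT_lin; ring. Qed.

Lemma Const_lin c a b l1 l2 e1 e2 m1 m2 :
  Const c (fun m => a * l1 m + b * l2 m) (fun m => a * e1 m + b * e2 m) (a * m1 + b * m2)
  = a * Const c l1 e1 m1 + b * Const c l2 e2 m2.
Proof. rewrite /Const ES_lin dotn_lin; ring. Qed.

Lemma weak c lam eta v : DF c lam eta -> Vset n.+3 M x r1 r2 r3 p h v ->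
  Const c lam eta 1 <= dotn n.+2 (Rmap n.+3 v) c.
Proof.
move=> [HL [Hl He]] [HA HM].
rewrite Rdot.
have E1 : \sum_(1 <= l < n.+2) v l * (c l - c n.+2) =
   - \sum_(1 <= l < n.+2) v l * (ES eta l - ES eta n.+2)
   - \sum_(1 <= l < n.+2) v l * ADT lam l.
  rewrite -sumrN -sumrB; apply: eq_big_nat => l Hl'.
  have := HL l Hl'; rewrite /Lin !mul1r => H0.
  have -> : c l - c n.+2 = - (ES eta l - ES eta n.+2) - ADT lam l.
    by apply/eqP; rewrite -subr_eq0 -H0; apply/eqP; ring.
  ring.
have E2 : \sum_(1 <= l < n.+2) v l * ADT lam l =
    \sum_(1 <= j < n.+3) lam j * mulmv n.+1 (@Amat R) v j.
  rewrite /ADT /mulmtv /mulmv.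
  under eq_bigr do rewrite mulr_sumr.
  rewrite exchange_big_nat /=; apply: eq_bigr => j _.
  rewrite mulr_sumr; apply: eq_bigr => l _; ring.
have E3 : \sum_(1 <= l < n.+2) v l * (ES eta l - ES eta n.+2) =
    \sum_(1 <= m < M.+1) eta m * h m * \sum_(1 <= l < n.+2) v l * (Dl m l - Dl m n.+2).
  rewrite /ES.
  under eq_bigr do rewrite -sumrB mulr_sumr.
  rewrite exchange_big_nat /=; apply: eq_bigr => m _.
  rewrite mulr_sumr; apply: eq_bigr => l _; ring.
have E4 : \sum_(1 <= m < M.+1) eta m * h m * Dl m n.+2 + 
    \sum_(1 <= m < M.+1) eta m * h m * \sum_(1 <= l < n.+2) v l * (Dl m l - Dl m n.+2)
  = \sum_(1 <= m < M.+1) eta m * (h m * dotn n.+2 (Rmap n.+3 v) (fun j => Dl m j)).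
  rewrite -big_split /=; apply: eq_bigr => m _; rewrite Rdot; ring.
have P1 : 0 <= \sum_(1 <= j < n.+3) lam j * (@bvec R j - mulmv n.+1 (@Amat R) v j).
  rewrite big_nat_cond; apply: sumr_ge0 => j /andP[/andP[j1 j2] _].
  apply: mulr_ge0; first by apply: Hl; rewrite j1 -ltnS.
  by rewrite subr_ge0; apply: HA; rewrite j1 -ltnS.
have P2 : 0 <= \sum_(1 <= m < M.+1) eta m * - (h m * dotn n.+2 (Rmap n.+3 v) (fun j => Dl m j)).
  rewrite big_nat_cond; apply: sumr_ge0 => m /andP[/andP[m1 m2] _].
  apply: mulr_ge0; first by apply: He; rewrite m1 -ltnS.
  by rewrite oppr_ge0; apply: HM; rewrite m1 -ltnS.
have S1 : \sum_(1 <= j < n.+3) lam j * (@bvec R j - mulmv n.+1 (@Amat R) v j) =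
   dotn n.+2 lam (@bvec R) - \sum_(1 <= j < n.+3) lam j * mulmv n.+1 (@Amat R) v j.
  by rewrite /dotn -sumrB; apply: eq_bigr => j _; ring.
have S2 : \sum_(1 <= m < M.+1) eta m * - (h m * dotn n.+2 (Rmap n.+3 v) (fun j => Dl m j))
   = - \sum_(1 <= m < M.+1) eta m * (h m * dotn n.+2 (Rmap n.+3 v) (fun j => Dl m j)).
  by rewrite -sumrN; apply: eq_bigr => m _; ring.
rewrite E1 E2 E3 /Const.
move: P1 P2 E4; rewrite S1 S2 /ES.
lra.
Qed.


Lemma small_pos (X Y : R) : (forall e, 0 < e -> X <= e * Y) -> X <= 0.
Proof.
move=> H; case: (leP X 0) => // X0.
case: (leP Y 0) => Y0.
  by have := H 1 ltr01; rewrite mul1r; lra.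
have := H (X / (2 * Y)) (divr_gt0 X0 (mulr_gt0 (ltr0Sn _ 1) Y0)).
have -> : X / (2 * Y) * Y = X / 2.
  by field; rewrite gt_eqF.
lra.
Qed.

Lemma sum_ordS (k : nat) (f : 'I_k.+1 -> R) (G : nat -> R) :
  \sum_(o < k.+1) f o * G o = f (inord 0) * G 0%N + \sum_(1 <= j < k.+1) f (inord j) * G j.
Proof.
rewrite (eq_bigr (fun o : 'I_k.+1 => f (inord o) * G o)); last by move=> o _; rewrite inord_val.
by rewrite -(big_mkord xpredT (fun j => f (inord j) * G j)) big_ltn.
Qed.

Lemma ADT_compute lam l : (1 <= l <= n.+1)%N -> ADT lam l = lam 1%N - lam l.+1.
Proof.
move=> Hl; rewrite /ADT /mulmtv big_ltn // {1}/Amat eqxx mul1r.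
rewrite big_add1 /=.
rewrite (eq_big_nat _ _ (F2 := fun j => if j == l then - lam l.+1 else 0)); last first.
  move=> j /andP[j1 _]; rewrite /Amat (_ : (j.+1 == 1%N) = false); last by case: j j1.
  rewrite /=; case: (eqVneq j l) => [->|jl]; first by rewrite ?eqxx mulN1r.
  by rewrite ?(eq_sym l) ?(negbTE jl) mul0r.
rewrite -big_mkcond big_nat1_eq; case/andP: Hl => -> /=; rewrite ltnS => -> /=.
by rewrite addrC.
Qed.

Lemma ES0 j : ES (fun _ => 0) j = 0.
Proof. by rewrite /ES big1 // => m _; rewrite !mul0r. Qed.

Lemma strong c D : (forall lam eta, DF c lam eta -> Const c lam eta 1 <= D) ->
  exists v, Vset n.+3 M x r1 r2 r3 p h v /\ dotn n.+2 (Rmap n.+3 v) c <= D.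
Proof.
move=> HD.
pose C := \sum_(1 <= l < n.+2) `|c l - c n.+2|.
pose lam0 j := if j == 1%N then C else C - c n.+2 + c j.-1.
have L0 l : (1 <= l <= n.+1)%N -> Lin c lam0 (fun _ => 0) 1 l = 0.
  move=> Hl; rewrite /Lin !ES0 ADT_compute // /lam0 eqxx /=.
  have -> : (l.+1 == 1%N) = false by case/andP: Hl; case: l.
  ring.
have L0pos j : (1 <= j <= n.+2)%N -> 0 <= lam0 j.
  move=> /andP[j1 j2]; rewrite /lam0.
  have C0 : 0 <= C by apply: sumr_ge0 => l _.
  case: eqP => // /eqP jn1.
  have jr : j.-1 \in index_iota 1 n.+2.
    by rewrite mem_index_iota; case: j j1 j2 jn1 => [|[|j]].
  have : `|c j.-1 - c n.+2| <= C.
    rewrite /C (bigD1_seq _ jr (iota_uniq _ _)) /= lerDl.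
    by apply: sumr_ge0 => l _.
  rewrite ler_norml => /andP[H1 H2]; lra.
pose I := ('I_n.+3 + 'I_M.+1 + 'I_1)%type.
pose a (i : I) (l : nat) : R := match i with
  | inl (inl j) => - @Amat R j l
  | inl (inr m) => if (m : nat) == 0%N then 0 else - (h m * (Dl m l - Dl m n.+2))
  | inr _ => - (c l - c n.+2) end.
pose b (i : I) : R := match i with
  | inl (inl j) => @bvec R j
  | inl (inr m) => if (m : nat) == 0%N then 0 else - (h m * Dl m n.+2)
  | inr _ => D - c n.+2 end.
have [v Hv] : exists v : nat -> R, forall i, 0 <= \sum_(1 <= l < n.+2) a i l * v l + b i.
  apply: farkas => y y0 Hy.
  pose lam j := y (inl (inl (inord j))).
  pose eta m := y (inl (inr (inord m))).
  pose mu := y (inr ord0).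
  have Ea l : (1 <= l)%N -> \sum_i y i * a i l = - Lin c lam eta mu l.
    move=> l1; rewrite big_sumType big_sumType big_ord1 /=.
    rewrite (sum_ordS _ (fun o => y (inl (inl o))) (fun j => - @Amat R j l)).
    rewrite (sum_ordS _ (fun o => y (inl (inr o)))
       (fun j => if j == 0%N then 0 else - (h j * (Dl j l - Dl j n.+2)))) /=.
    have -> : @Amat R 0 l = 0 by rewrite /Amat; case: l l1.
    have -> : \sum_(1 <= j < n.+3) y (inl (inl (inord j))) * - @Amat R j l =
       - ADT lam l.
      by rewrite /ADT /mulmtv -sumrN; apply: eq_bigr => j _; rewrite /lam; ring.
    have -> : \sum_(1 <= j < M.+1) y (inl (inr (inord j))) *
        (if j == 0%N then 0 else - (h j * (Dl j l - Dl j n.+2))) =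
       - (ES eta l - ES eta n.+2).
      rewrite /ES -sumrB -sumrN; apply: eq_big_nat => j /andP[j1 _].
      rewrite (_ : (j == 0%N) = false); last by case: j j1.
      rewrite /eta; ring.
    rewrite /Lin -/mu; ring.
  have Eb : \sum_i y i * b i = mu * D - Const c lam eta mu.
    rewrite big_sumType big_sumType big_ord1 /=.
    rewrite (sum_ordS _ (fun o => y (inl (inl o))) (fun j => @bvec R j)).
    rewrite (sum_ordS _ (fun o => y (inl (inr o)))
       (fun j => if j == 0%N then 0 else - (h j * Dl j n.+2))) /=.
    have -> : \sum_(1 <= j < M.+1) y (inl (inr (inord j))) *
        (if j == 0%N then 0 else - (h j * Dl j n.+2)) = - ES eta n.+2.
      rewrite /ES -sumrN; apply: eq_big_nat => j /andP[j1 _].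
      rewrite (_ : (j == 0%N) = false); last by case: j j1.
      rewrite /eta; ring.
    rewrite /Const /dotn -/mu /bvec /=; ring.
  have HL l : (1 <= l <= n.+1)%N -> Lin c lam eta mu l = 0.
    move=> Hl; have := Hy l Hl; rewrite Ea; last by case/andP: Hl.
    by move/eqP; rewrite oppr_eq0 => /eqP.
  have mu0 : 0 <= mu := y0 _.
  have HC : Const c lam eta mu - mu * D <= 0.
    apply: (@small_pos _ (D - Const c lam0 (fun _ => 0) 1)) => e e0.
    set s := mu + e.
    have s0 : 0 < s by rewrite /s; lra.
    pose lam' j := s^-1 * lam j + (e / s) * lam0 j.
    pose eta' (m : nat) := s^-1 * eta m + (e / s) * 0.
    have Hs : s^-1 * mu + e / s * 1 = 1.
      by rewrite /s; field; rewrite gt_eqF // -/s.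
    have DF' : DF c lam' eta'.
      split; [|split].
      - move=> l Hl.
        have -> : Lin c lam' eta' 1 l = Lin c lam' eta' (s^-1 * mu + e / s * 1) l by rewrite Hs.
        by rewrite /lam' /eta' Lin_lin L0 // HL // !mulr0 addr0.
      - move=> j Hj; rewrite /lam'; apply: addr_ge0; apply: mulr_ge0.
        + by rewrite invr_ge0 ltW.
        + exact: y0.
        + by apply: divr_ge0; rewrite ltW.
        + exact: L0pos.
      - move=> m Hm; rewrite /eta' mulr0 addr0; apply: mulr_ge0.
        + by rewrite invr_ge0 ltW.
        + exact: y0.
    have := HD _ _ DF'.
    rewrite /lam' /eta' -[in Const _ _ _ 1]Hs Const_lin.
    have -> : s^-1 * Const c lam eta mu + e / s * Const c lam0 (fun=> 0) 1 =
       (Const c lam eta mu + e * Const c lam0 (fun=> 0) 1) / s.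
      by rewrite mulrDl mulrAC mulrC.
    rewrite ler_pdivrMr // /s; lra.
  rewrite Eb; lra.
exists v; split; last first.
  have := Hv (inr ord0); rewrite /= Rdot.
  have -> : \sum_(1 <= l < n.+2) - (c l - c n.+2) * v l =
     - \sum_(1 <= l < n.+2) v l * (c l - c n.+2).
    by rewrite -sumrN; apply: eq_bigr => l _; ring.
  lra.
split.
  move=> j /andP[j1 j2].
  have := Hv (inl (inl (inord j))); rewrite /= inordK; last by rewrite ltnS.
  rewrite /mulmv.
  have -> : \sum_(1 <= l < n.+2) - @Amat R j l * v l = - \sum_(1 <= l < n.+2) @Amat R j l * v l.
    by rewrite -sumrN; apply: eq_bigr => l _; ring.
  lra.
move=> m /andP[m1 m2].
have := Hv (inl (inr (inord m))); rewrite /= inordK; last by rewrite ltnS.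
have -> : (m == 0%N) = false by case: m m1 {m2}.
rewrite Rdot.
have -> : \sum_(1 <= l < n.+2) - (h m * (Dl m l - Dl m n.+2)) * v l =
   - (h m * \sum_(1 <= l < n.+2) v l * (Dl m l - Dl m n.+2)).
  by rewrite mulr_sumr -sumrN; apply: eq_bigr => l _; ring.
lra.
Qed.

End Main.
Section Rep.
Variables (R : realType) (n : nat) (x : nat -> R).
Hypothesis Hx : forall i, (1 <= i < n.+3)%N -> x i < x i.+1.

Lemma x_mono a b : (1 <= a)%N -> (a <= b)%N -> (b <= n.+3)%N -> x a <= x b.
Proof.
move=> a1 ab; rewrite -(subnK ab); elim: (b - a)%N => [|k IH] bn; first by rewrite add0n.
rewrite addSn in bn *; apply: le_trans (IH (ltnW bn)) (ltW (Hx _ _)).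
by rewrite (leq_trans a1 (leq_addl _ _)).
Qed.

Lemma sum_ind (F w : nat -> R) i m :
  (1 <= i < m)%N -> (forall l, (1 <= l < m)%N -> w l = if l == i then 1 else 0) ->
  \sum_(1 <= l < m) F l * w l = F i.
Proof.
move=> Hi Hw.
rewrite (eq_big_nat _ _ (F2 := fun l => if l == i then F i else 0)); last first.
  by move=> l Hl; rewrite Hw //; case: eqP => [->|_]; rewrite ?mulr1 ?mulr0.
by rewrite -big_mkcond big_nat1_eq Hi.
Qed.

Lemma seg_exists t : exists i, (x 1%N <= t <= x n.+3) -> (1 <= i <= n.+2)%N /\ x i <= t <= x i.+1.
Proof.
case: (boolP (x 1%N <= t <= x n.+3)) => Ht; last by exists 0%N.
suff : forall k, (1 <= k)%N -> x 1%N <= t <= x k.+1 ->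
    exists i, (1 <= i <= k)%N /\ x i <= t <= x i.+1.
  by move=> /(_ n.+2 isT Ht) [i Hi]; exists i.
elim=> [//|k IH] _ /andP[t1 t2].
case: (leP t (x k.+1)) => tk.
  case: k IH t2 tk => [|k] IH t2 tk; first by exists 1%N; rewrite t1 t2.
  by have [i [Hi1 Hi2]] := IH isT (introT andP (conj t1 tk)); exists i; split => //; case/andP: Hi1 => -> /= ?; exact: (leq_trans _ (leqnSn _)).
by exists k.+1; rewrite (ltW tk) t2 leqnn.
Qed.

Lemma sum_one (G : nat -> R) i a b : (a <= i < b)%N ->
  (forall l, (a <= l < b)%N -> l != i -> G l = 0) -> \sum_(a <= l < b) G l = G i.
Proof.
move=> Hi HG.
rewrite (eq_big_nat _ _ (F2 := fun l => if l == i then G i else 0)); last first.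
  by move=> l Hl; case: eqP => [->|/eqP li] //; rewrite HG.
by rewrite -big_mkcond big_nat1_eq Hi.
Qed.

Lemma sum_two (F : nat -> R) a b i j : (a <= i < b)%N -> (a <= j < b)%N -> i != j ->
  (forall l, (a <= l < b)%N -> 0 <= F l) -> F i + F j <= \sum_(a <= l < b) F l.
Proof.
move=> Hi Hj ij HF.
rewrite (bigD1_seq i) ?mem_index_iota ?iota_uniq //= lerD2l.
rewrite -big_filter (bigD1_seq j) ?filter_uniq ?iota_uniq //=; last first.
  by rewrite mem_filter eq_sym ij mem_index_iota.
rewrite lerDl big_seq_cond; apply: sumr_ge0 => l /andP[+ _].
by rewrite mem_filter mem_index_iota => /andP[_ /HF].
Qed.

Lemma rep t (y w : nat -> R) :
  (forall j, (1 <= j <= n.+2)%N ->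
     [/\ x j * w j - y j <= 0, x j.+1 * w j - y j >= 0 & (w j = 0 \/ w j = 1)]) ->
  \sum_(1 <= j < n.+3) w j = 1 -> \sum_(1 <= j < n.+3) y j = t ->
  forall j, (1 <= j <= n.+2)%N ->
  mulmv n.+2 (Pmat x) y j + mulmv n.+2 (Qmat x) w j = gvec x t j.
Proof.
move=> Hc Hw Hy.
have rng l : (1 <= l < n.+3)%N = (1 <= l <= n.+2)%N by [].
have w01 l : (1 <= l < n.+3)%N -> w l = 0 \/ w l = 1 by move=> Hl; case: (Hc l Hl).
have [i Hi wi] : exists2 i, (1 <= i < n.+3)%N & w i = 1.
  case: (boolP (has (fun j => w j == 1) (index_iota 1 n.+3))).
    by case/hasP => i; rewrite mem_index_iota => Hi /eqP wi; exists i.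
  move/hasPn => H0; exfalso; move: Hw.
  rewrite big_seq big1 => [|l]; first by move/eqP; rewrite eq_sym oner_eq0.
  move=> lr; have := H0 l lr; rewrite mem_index_iota in lr.
  by case: (w01 l lr) => -> //; rewrite eqxx.
have w0ge l : (1 <= l < n.+3)%N -> 0 <= w l by move=> Hl; case: (w01 l Hl) => ->.
have w0 l : (1 <= l < n.+3)%N -> l != i -> w l = 0.
  move=> Hl li; case: (w01 l Hl) => // wl1.
  have := @sum_two w _ _ _ _ Hi Hl _ w0ge; rewrite eq_sym li Hw wi wl1 => /(_ isT).
  lra.
have y0 l : (1 <= l < n.+3)%N -> l != i -> y l = 0.
  move=> Hl li; case: (Hc l Hl) => + + _; rewrite w0 // mulr0; lra.
have yi : y i = t by rewrite -Hy (@sum_one y i 1 n.+3 Hi y0).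
move=> j Hj; have Hj' : (1 <= j < n.+3)%N by [].
rewrite /mulmv (@sum_one _ j 1 n.+3 Hj'); last first.
  by move=> l _ lj; rewrite /Pmat (negbTE lj) mul0r.
rewrite (@sum_one _ i 1 n.+3) //; last by move=> l Hl li; rewrite w0 // mulr0.
rewrite wi mulr1 /Pmat /Qmat eqxx /gvec.
have Hxj : x j < x j.+1 by apply: Hx.
have dx0 : x j.+1 - x j != 0 by rewrite subr_eq0 gt_eqF.
have [ti1 ti2] : x i <= t /\ t <= x i.+1.
  by case: (Hc i Hi); rewrite wi !mulr1 => ? ? _; split; lra.
case: (ltngtP j i) => ji.
- rewrite y0 //; last by rewrite ltn_eqF.
  rewrite ?ji mulr0 add0r.
  have Hji : x j.+1 <= x i.
    by apply: x_mono => //; case/andP: Hi => _ /ltnW.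
  case: ifP => [tj|_]; first lra.
  case: ifP => // tj1.
  have -> : t = x j.+1 by lra.
  by rewrite divff.
- rewrite y0 //; last by rewrite gtn_eqF.
  rewrite mulr0 ?addr0.
  have Hij : x i.+1 <= x j.
    by apply: x_mono => //; case/andP: Hj => _ /leqW.
  by case: ifP => // tj; lra.
- subst j; rewrite yi.
  have -> : 1 / (x i.+1 - x i) * t + - x i / (x i.+1 - x i) = (t - x i) / (x i.+1 - x i).
    by field.
  case: ifP => tj; last by rewrite ti2.
  have tx : t = x i.
    lra.
  by rewrite tx subrr mul0r.
Qed.

End Rep.
Lemma ereal_le_all (R : realType) (X S : \bar R) :
  (forall D : R, (S <= D%:E)%E -> (X <= D%:E)%E) -> (X <= S)%E.
Proof.
case: S => [r| |] H; first exact: H.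
- exact: leey.
- case: X H => [y| |] H //.
  + have := H (y - 1)%R (leNye _); rewrite lee_fin => H1.
    by exfalso; move: H1; lra.
  + by have := H 0 (leNye _).
Qed.

Section Final.
Variables (R : realType) (q M K nn : nat) (x r1 r2 r3 p h : nat -> R)
  (Z : set 'rV[R]_nn) (xi : nat -> 'rV[R]_nn).
Hypothesis Hx : forall i, (1 <= i < q.+3)%N -> x i < x i.+1.
Hypothesis Ht : forall z k, Z z -> (1 <= k <= K)%N -> x 1%N <= rdot z (xi k) <= x q.+3.

Definition cz (z : 'rV[R]_nn) j := K%:R^-1 * \sum_(1 <= k < K.+1) gvec x (rdot z (xi k)) j.

Lemma objc z v : pro_obj q.+3 K x xi z v = dotn q.+2 (Rmap q.+3 v) (cz z).
Proof.
rewrite /pro_obj /dotn /cz /= exchange_big_nat /= mulr_sumr; apply: eq_bigr => j _.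
by rewrite -mulr_sumr mulrCA.
Qed.

Lemma svec_eq z (eta : nat -> R) (y w : nat -> nat -> R) :
  (forall k j, (1 <= k <= K)%N -> (1 <= j <= q.+2)%N ->
     [/\ x j * w k j - y k j <= 0, x j.+1 * w k j - y k j >= 0
       & (w k j = 0 \/ w k j = 1)]) ->
  (forall k, (1 <= k <= K)%N ->
     \sum_(1 <= j < q.+3) w k j = 1 /\ \sum_(1 <= j < q.+3) y k j = rdot z (xi k)) ->
  forall j, (1 <= j <= q.+2)%N ->
  svec q.+3 M K x r1 r2 r3 p h eta y w j = cz z j + ES R M x r1 r2 r3 p h eta j.
Proof.
move=> H1 H2 j Hj; rewrite /svec /cz /ES; congr (_ * _ + _).
apply: eq_big_nat => k Hk.
have [Hw Hy] := H2 k Hk.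
exact: (@rep R q x Hx _ _ _ (fun j Hj => H1 k j Hk Hj) Hw Hy).
Qed.

Lemma milp_to_dual z lam eta y w :
  milp_feasible q.+3 M K x r1 r2 r3 p h Z xi z lam eta y w ->
  [/\ DF R q M x r1 r2 r3 p h (cz z) lam eta,
      milp_obj q.+3 M K x r1 r2 r3 p h lam eta y w = Const R q M x r1 r2 r3 p h (cz z) lam eta 1
    & Z z].
Proof.
move=> [HA [HB [HC [HZ [Hl He]]]]].
have Hs := @svec_eq z eta y w HB HC.
split; last by rewrite -in_setE.
- split => // l Hl'.
  have Hl2 : (1 <= l <= q.+2)%N by case/andP: Hl' => -> /leqW.
  have Hn : (1 <= q.+2 <= q.+2)%N by rewrite leqnn.
  have := HA l Hl'; rewrite /= (Hs l Hl2) (Hs q.+2 Hn).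
  by rewrite /Lin /ADT !mul1r.
- have Hn : (1 <= q.+2 <= q.+2)%N by rewrite leqnn.
  by rewrite /milp_obj /Const /= (Hs q.+2 Hn) mul1r.
Qed.

Lemma dual_to_milp z lam eta : Z z -> DF R q M x r1 r2 r3 p h (cz z) lam eta ->
  exists y w, milp_feasible q.+3 M K x r1 r2 r3 p h Z xi z lam eta y w /\
     milp_obj q.+3 M K x r1 r2 r3 p h lam eta y w = Const R q M x r1 r2 r3 p h (cz z) lam eta 1.
Proof.
move=> Zz [HL [Hl He]].
have [f Hf] := choice (fun k => seg_exists R q x (rdot z (xi k))).
pose y k j := if j == f k then rdot z (xi k) else 0.
pose w k j : R := if j == f k then 1 else 0.
have HB : forall k j, (1 <= k <= K)%N -> (1 <= j <= q.+2)%N ->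
     [/\ x j * w k j - y k j <= 0, x j.+1 * w k j - y k j >= 0
       & (w k j = 0 \/ w k j = 1)].
  move=> k j Hk Hj; have [Hf1 /andP[Hf2 Hf3]] := Hf k (Ht _ _ Zz Hk).
  rewrite /w /y; case: eqP => [->|_]; last by rewrite !mulr0 !subrr; split; [done|done|left].
  by rewrite !mulr1; split; [lra|lra|right].
have HC : forall k, (1 <= k <= K)%N ->
     \sum_(1 <= j < q.+3) w k j = 1 /\ \sum_(1 <= j < q.+3) y k j = rdot z (xi k).
  move=> k Hk; have [Hf1 _] := Hf k (Ht _ _ Zz Hk).
  have Hr : (1 <= f k < q.+3)%N by [].
  rewrite /w /y -!big_mkcond !big_nat1_eq Hr; split => //.
have Hs := @svec_eq z eta y w HB HC.
have Hn : (1 <= q.+2 <= q.+2)%N by rewrite leqnn.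
exists y, w; split; last by rewrite /milp_obj /Const /= (Hs q.+2 Hn) mul1r.
split.
  move=> l Hl'.
  have Hl2 : (1 <= l <= q.+2)%N by case/andP: Hl' => -> /leqW.
  rewrite /= (Hs l Hl2) (Hs q.+2 Hn).
  by have := HL l Hl'; rewrite /Lin /ADT !mul1r.
split => //; split => //; split => //; by rewrite in_setE.
Qed.

End Final.

Theorem proposition8 (R : realType) (N M K n : nat) (x : nat -> R)
  (r1 r2 r3 p h : nat -> R) (Z : set 'rV[R]_n) (xi : nat -> 'rV[R]_n) :
  (3 <= N)%N -> (1 <= M)%N -> (1 <= K)%N ->
  (forall i, (1 <= i < N)%N -> x i < x i.+1) ->
  (forall m, (1 <= m <= M)%N ->
     [/\ r1 m <= r3 m,
         x 1%N <= r1 m <= x N, x 1%N <= r2 m <= x N, x 1%N <= r3 m <= x N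
       & 0 <= p m <= 1] /\ (h m = 1 \/ h m = -1)) ->
  compact Z -> convex_rV Z ->
  (forall z k, Z z -> (1 <= k <= K)%N -> x 1%N <= rdot z (xi k) <= x N) ->
  pro_value N M K x r1 r2 r3 p h Z xi = milp_value N M K x r1 r2 r3 p h Z xi.
Proof.
case: N => [|[|[|q]]] // _ _ _ Hx _ _ _ Ht.
apply/eqP; rewrite eq_le; apply/andP; split.
- apply: ge_ereal_sup => _ [z Zz <-].
  apply: ereal_le_all => D SD.
  have [v [Vv fv]] : exists v, Vset q.+3 M x r1 r2 r3 p h v /\
      dotn q.+2 (Rmap q.+3 v) (@cz R K n x xi z) <= D.
    apply: strong => lam eta Hdf.
    have [y [w [Hf Ho]]] := @dual_to_milp R q M K n x r1 r2 r3 p h Z xi Hx Ht z lam eta Zz Hdf.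
    have : ((milp_obj q.+3 M K x r1 r2 r3 p h lam eta y w)%:E <= milp_value q.+3 M K x r1 r2 r3 p h Z xi)%E.
      by apply: ereal_sup_ubound; exists z, lam, eta, y, w.
    by rewrite Ho => /le_trans /(_ SD); rewrite lee_fin.
  apply: ereal_inf_le; exists (pro_obj q.+3 K x xi z v)%:E; first by exists v.
  by rewrite lee_fin objc.
- apply: ge_ereal_sup => _ [z [lam [eta [y [w [Hf ->]]]]]].
  have [Hdf Ho Zz] := @milp_to_dual R q M K n x r1 r2 r3 p h Z xi Hx z lam eta y w Hf.
  apply: (@le_trans _ _ (ereal_inf [set (pro_obj q.+3 K x xi z v)%:E
                           | v in Vset q.+3 M x r1 r2 r3 p h])).
    apply: le_ereal_inf_tmp => _ [v Vv <-].
    by rewrite lee_fin Ho objc; apply: weak.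
  by apply: ereal_sup_ubound; exists z.
Qed.
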